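(* Let $N\ge1$, let real channel gains $a_{s,r},a_{s,j},a_{r,j}$ ($j=1,\dots,N$) be fixed, and for powers $\mathbf{P}=(P_s,P_r)\in[0,\infty)^2$ set $\mathsf{SNR}_{s,r}=a_{s,r}^2P_s$, $\mathsf{SNR}_{s,j}=a_{s,j}^2P_s$, $\mathsf{SNR}_{r,j}=a_{r,j}^2P_r$, and $\mathbf{S}(\mathbf{P})=(\mathsf{SNR}_{s,r},\mathsf{SNR}_{s,1},\dots,\mathsf{SNR}_{s,N},\mathsf{SNR}_{r,1},\dots,\mathsf{SNR}_{r,N})$. With $\mathsf{C}(x)=\tfrac12\log(1+x)$, $f_j(\rho,\mathbf{S})=\mathsf{SNR}_{s,j}+\mathsf{SNR}_{r,j}+2\rho\sqrt{\mathsf{SNR}_{s,j}\mathsf{SNR}_{r,j}}$, $g_j(\rho,\mathbf{S})=(1-\rho^2)(\mathsf{SNR}_{s,j}+\mathsf{SNR}_{s,r})$ and $R_{CS}(\rho,\mathbf{S})=\min_{1\le j\le N}\min(\mathsf{C}(f_j(\rho,\mathbf{S})),\mathsf{C}(g_j(\rho,\mathbf{S})))$, the map $(t,\mathbf{P})\mapsto R_{CS}(\sqrt t,\mathbf{S}(\mathbf{P}))$ is quasi-concave on $[0,1]\times[0,\infty)^2$ (i.e., $R_{CS}(\rho,\mathbf{S}(\mathbf{P}))$ is quasi-concave in $(\rho^2,\mathbf{P})$).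
   Context: Setting: real AWGN multicast relay channel with source $s$, relay $r$ and destinations $1,\dots,N$; $\rho\in[0,1]$ is the source–relay input correlation coefficient. A function $F$ on a convex set is quasi-concave if $F(\lambda x_1+(1-\lambda)x_2)\ge\min(F(x_1),F(x_2))$ for all $x_1,x_2$ and $\lambda\in[0,1]$. *)

(* Defs.v *)
From Stdlib Require Import Reals.
Open Scope R_scope.

Definition Cap (x : R) : R := / 2 * ln (1 + x).

(* min_{1 <= j <= n} h j, meaningful for n >= 1 *)
Fixpoint min_1_to (h : nat -> R) (n : nat) : R :=
  match n with
  | O => h 1%nat
  | S m => Rmin (min_1_to h m) (h (S m))
  end.

(* An SNR vector S = (SNR_{s,r}, SNR_{s,1..N}, SNR_{r,1..N});
   the destination-indexed components are functions nat -> R used on 1..N. *)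
Record snr_vec := mkSNR { snr_sr : R; snr_s : nat -> R; snr_r : nat -> R }.

Definition f_j (j : nat) (rho : R) (S : snr_vec) : R :=
  snr_s S j + snr_r S j + 2 * rho * sqrt (snr_s S j * snr_r S j).

Definition g_j (j : nat) (rho : R) (S : snr_vec) : R :=
  (1 - rho ^ 2) * (snr_s S j + snr_sr S).

Definition R_CS (N : nat) (rho : R) (S : snr_vec) : R :=
  min_1_to (fun j => Rmin (Cap (f_j j rho S)) (Cap (g_j j rho S))) N.

Definition S_of_P (a_sr : R) (a_s a_r : nat -> R) (Ps Pr : R) : snr_vec :=
  mkSNR (a_sr ^ 2 * Ps) (fun j => a_s j ^ 2 * Ps) (fun j => a_r j ^ 2 * Pr).

Definition dom3 (t Ps Pr : R) : Prop := 0 <= t <= 1 /\ 0 <= Ps /\ 0 <= Pr.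

Definition quasi_concave3 (D : R -> R -> R -> Prop) (F : R -> R -> R -> R) : Prop :=
  forall t1 p1 q1 t2 p2 q2 lam : R,
    D t1 p1 q1 -> D t2 p2 q2 -> 0 <= lam <= 1 ->
    F (lam * t1 + (1 - lam) * t2) (lam * p1 + (1 - lam) * p2)
      (lam * q1 + (1 - lam) * q2)
    >= Rmin (F t1 p1 q1) (F t2 p2 q2).

(* Main.v *)
Require Import Defs.
From Stdlib Require Import Reals Lra Psatz.
Open Scope R_scope.

Lemma amgm3 X Y W : 0 <= X -> 0 <= Y -> 0 <= W ->
  0 <= X^3 - 3*X*Y*W + Y*W*(Y+W).
Proof.
  intros HX HY HW.
  assert (Hs : 0 <= (Y+W+X)*(Y+W-2*X)^2) by (apply Rmult_le_pos; [lra| apply pow2_ge_0]).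
  assert (Hp : 0 <= (Y-W)^2) by apply pow2_ge_0.
  destruct (Rle_lt_dec (3*X) (Y+W)).
  - assert (0 <= Y*W*(Y+W-3*X)) by (apply Rmult_le_pos; [nra|lra]). nra.
  - assert (0 <= ((Y+W)^2/4 - Y*W)*(3*X-(Y+W))) by (apply Rmult_le_pos; nra). nra.
Qed.

Lemma tangent z P Q a b : 0 <= z -> 0 < P -> 0 < Q -> 0 <= a -> 0 <= b ->
  P*Q*(z*(2*a+2*b+3*a*b) - a^2*P - b^2*Q - a^2*b*P - a*b^2*Q) <= (P+Q+z)*z^2.
Proof.
  intros. pose proof (amgm3 z (a*P) (b*Q) H ltac:(nra) ltac:(nra)).
  assert (0 <= Q*(z-a*P)^2) by (apply Rmult_le_pos; [lra|apply pow2_ge_0]).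
  assert (0 <= P*(z-b*Q)^2) by (apply Rmult_le_pos; [lra|apply pow2_ge_0]).
  nra.
Qed.

Definition ell (a b z P Q : R) := z*(2*a+2*b+3*a*b) - a^2*P - b^2*Q - a^2*b*P - a*b^2*Q.

Lemma point_bound m t P Q a b : 0 <= m -> 0 <= t -> 0 <= P -> 0 <= Q -> 0 <= a -> 0 <= b ->
  m <= P + Q + 2 * sqrt (t*P*Q) -> ell a b (m - P - Q) P Q <= 4*m*t.
Proof.
  intros Hm0 Ht HP HQ Ha Hb Hm. unfold ell.
  destruct (Rle_lt_dec (m-P-Q) 0) as [Hz|Hz].
  - assert (0 <= a^2+a^2*b) by (assert (0<=a^2) by nra; nra).
    assert (0 <= (a^2+a^2*b)*P) by (apply Rmult_le_pos; lra).
    assert (0 <= b^2+a*b^2) by (assert (0<=b^2) by nra; nra).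
    assert (0 <= (b^2+a*b^2)*Q) by (apply Rmult_le_pos; lra).
    assert (0 <= 2*a+2*b+3*a*b) by nra.
    assert (m-P-Q <= 0 -> (m-P-Q)*(2*a+2*b+3*a*b) <= 0) by (intros; nra).
    assert (0 <= m*t) by (apply Rmult_le_pos; lra). nra.
  - set (z := m - P - Q) in *.
    assert (Hs : z <= 2*sqrt (t*P*Q)) by (unfold z; lra).
    assert (Hpos : 0 < t*P*Q).
    { destruct (Rle_lt_dec (t*P*Q) 0) as [h|h]; auto.
      assert (t*P*Q = 0) by (apply Rle_antisym; [lra| apply Rmult_le_pos; [apply Rmult_le_pos|];lra]).
      rewrite H, sqrt_0 in Hs. lra. }
    assert (HP' : 0 < P) by (destruct HP as [h|h]; [exact h| subst; nra]).
    assert (HQ' : 0 < Q) by (destruct HQ as [h|h]; [exact h| subst; nra]).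
    assert (Hsq : z^2 <= 4*(t*P*Q)).
    { assert (z^2 <= (2*sqrt(t*P*Q))^2) by (apply pow_incr; lra).
      replace ((2*sqrt(t*P*Q))^2) with (4*(sqrt(t*P*Q)*sqrt(t*P*Q))) in H by ring.
      rewrite sqrt_sqrt in H; lra. }
    pose proof (tangent z P Q a b ltac:(lra) HP' HQ' Ha Hb) as Ht2.
    replace (P+Q+z) with m in Ht2 by (unfold z; ring).
    assert (HPQ : 0 < P*Q) by nra.
    apply (Rmult_le_reg_l (P*Q)); auto.
    nra.
Qed.

Lemma sq0 t Q : sqrt (t*0*Q) = 0.
Proof. replace (t*0*Q) with 0 by ring. apply sqrt_0. Qed.

Lemma core m l t1 P1 Q1 t2 P2 Q2 : 0 <= l <= 1 ->
  0 <= t1 -> 0 <= P1 -> 0 <= Q1 -> 0 <= t2 -> 0 <= P2 -> 0 <= Q2 ->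
  m <= P1 + Q1 + 2 * sqrt (t1*P1*Q1) -> m <= P2 + Q2 + 2 * sqrt (t2*P2*Q2) ->
  m <= (l*P1+(1-l)*P2) + (l*Q1+(1-l)*Q2)
        + 2 * sqrt ((l*t1+(1-l)*t2)*(l*P1+(1-l)*P2)*(l*Q1+(1-l)*Q2)).
Proof.
  intros Hl Ht1 HP1 HQ1 Ht2 HP2 HQ2 H1 H2.
  set (T := l*t1+(1-l)*t2). set (P := l*P1+(1-l)*P2). set (Q := l*Q1+(1-l)*Q2).
  pose proof (sqrt_pos (T*P*Q)).
  destruct (Rle_lt_dec m (P+Q)) as [Hc|Hc]; [lra|].
  assert (HP0 : 0 <= P) by (unfold P; nra). assert (HQ0 : 0 <= Q) by (unfold Q; nra).
  assert (HPp : 0 < P).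
  { destruct HP0 as [h|h]; auto. exfalso.
    assert (E1 : l*P1 = 0) by (unfold P in h; nra).
    assert (E2 : (1-l)*P2 = 0) by (unfold P in h; nra).
    apply Rmult_integral in E1; apply Rmult_integral in E2.
    destruct E1 as [E1|E1]; destruct E2 as [E2|E2]; try lra.
    - subst P2. rewrite sq0 in H2. unfold Q in Hc. rewrite E1 in Hc. lra.
    - subst P1. rewrite sq0 in H1. unfold Q in Hc. assert (l = 1) by lra. subst l. lra.
    - subst P1 P2. rewrite sq0 in H1, H2. unfold Q in Hc. nra. }
  assert (HQp : 0 < Q).
  { destruct HQ0 as [h|h]; auto. exfalso.
    assert (E1 : l*Q1 = 0) by (unfold Q in h; nra).
    assert (E2 : (1-l)*Q2 = 0) by (unfold Q in h; nra).
    apply Rmult_integral in E1; apply Rmult_integral in E2.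
    destruct E1 as [E1|E1]; destruct E2 as [E2|E2]; try lra.
    - subst Q2. replace (t2*P2*0) with 0 in H2 by ring. rewrite sqrt_0 in H2. unfold P in Hc. rewrite E1 in Hc. lra.
    - subst Q1. replace (t1*P1*0) with 0 in H1 by ring. rewrite sqrt_0 in H1. unfold P in Hc. assert (l = 1) by lra. subst l. lra.
    - subst Q1 Q2. replace (t1*P1*0) with 0 in H1 by ring. replace (t2*P2*0) with 0 in H2 by ring.
      rewrite sqrt_0 in H1, H2. unfold P in Hc. nra. }
  set (z := m - P - Q).
  assert (Hz : 0 < z) by (unfold z; lra).
  assert (Hm : 0 < m) by lra.
  set (a := z / P). set (b := z / Q).
  assert (Ha : 0 <= a) by (unfold a; apply Rlt_le, Rdiv_lt_0_compat; lra).
  assert (Hb : 0 <= b) by (unfold b; apply Rlt_le, Rdiv_lt_0_compat; lra).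
  pose proof (point_bound m t1 P1 Q1 a b ltac:(lra) Ht1 HP1 HQ1 Ha Hb H1) as B1.
  pose proof (point_bound m t2 P2 Q2 a b ltac:(lra) Ht2 HP2 HQ2 Ha Hb H2) as B2.
  assert (Hlin : l * ell a b (m-P1-Q1) P1 Q1 + (1-l) * ell a b (m-P2-Q2) P2 Q2
                 = ell a b z P Q) by (unfold ell, z, P, Q; ring).
  assert (Hval : ell a b z P Q = m * z^2 / (P*Q)).
  { unfold ell, a, b. replace m with (P+Q+z) by (unfold z; ring). field. lra. }
  assert (HT : m * z^2 / (P*Q) <= 4*m*T).
  { rewrite <- Hval, <- Hlin. unfold T. nra. }
  assert (Hsq : z^2 <= 4*(T*P*Q)).
  { assert (HPQ : 0 < P*Q) by nra.
    apply (Rmult_le_compat_r (P*Q)) in HT; [|lra].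
    replace (m * z^2 / (P*Q) * (P*Q)) with (m*z^2) in HT by (field; lra).
    nra. }
  assert (z <= 2 * sqrt (T*P*Q)).
  { rewrite <- (sqrt_pow2 z) by lra. replace 2 with (sqrt 4).
    2:{ replace 4 with (2^2) by ring. apply sqrt_pow2; lra. }
    rewrite <- sqrt_mult by (try lra; nra). apply sqrt_le_1; try nra. }
  unfold z in *. lra.
Qed.

Lemma Rmin_qc a1 a2 am b1 b2 bm : am >= Rmin a1 a2 -> bm >= Rmin b1 b2 ->
  Rmin am bm >= Rmin (Rmin a1 b1) (Rmin a2 b2).
Proof. intros. unfold Rmin in *. repeat destruct Rle_dec; lra. Qed.

Lemma min_qc (h1 h2 hm : nat -> R) : (forall j, hm j >= Rmin (h1 j) (h2 j)) ->
  forall n, min_1_to hm n >= Rmin (min_1_to h1 n) (min_1_to h2 n).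
Proof.
  intros H n. induction n as [|n IH]; simpl; auto.
  pose proof (H (S n)). unfold Rmin in *. repeat destruct Rle_dec; lra.
Qed.

Lemma Cap_mono x y : 0 <= x -> x <= y -> Cap x <= Cap y.
Proof.
  intros. unfold Cap. apply Rmult_le_compat_l; [lra|].
  destruct (Req_dec x y); [subst; lra|]. left. apply ln_increasing; lra.
Qed.

Lemma Cap_qc u1 u2 um : 0 <= u1 -> 0 <= u2 -> Rmin u1 u2 <= um ->
  Cap um >= Rmin (Cap u1) (Cap u2).
Proof.
  intros. unfold Rmin in *. destruct (Rle_dec u1 u2);
  destruct (Rle_dec (Cap u1) (Cap u2)); apply Rle_ge.
  - apply Cap_mono; lra.
  - pose proof (Cap_mono u1 um); lra.
  - pose proof (Cap_mono u2 um); lra.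
  - apply Cap_mono; lra.
Qed.

Lemma g_qc K l t1 p1 t2 p2 : 0 <= K -> 0 <= l <= 1 -> 0 <= t1 <= 1 -> 0 <= t2 <= 1 ->
  0 <= p1 -> 0 <= p2 ->
  Rmin ((1-t1)*(K*p1)) ((1-t2)*(K*p2)) <= (1-(l*t1+(1-l)*t2))*(K*(l*p1+(1-l)*p2)).
Proof.
  intros. set (m := Rmin ((1-t1)*(K*p1)) ((1-t2)*(K*p2))).
  assert (m <= (1-t1)*(K*p1)) by apply Rmin_l.
  assert (m <= (1-t2)*(K*p2)) by apply Rmin_r.
  assert (0 <= K*p1) by nra. assert (0 <= K*p2) by nra.
  assert (0 <= m) by (unfold m, Rmin; destruct Rle_dec; nra).
  set (x1 := K*p1) in *. set (x2 := K*p2) in *.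
  assert (Hp : m*m <= ((1-t1)*x2)*((1-t2)*x1)).
  { replace (((1-t1)*x2)*((1-t2)*x1)) with (((1-t1)*x1)*((1-t2)*x2)) by ring.
    apply Rmult_le_compat; lra. }
  assert (Hs : 2*m <= (1-t1)*x2 + (1-t2)*x1).
  { assert (0 <= (1-t1)*x2) by nra. assert (0 <= (1-t2)*x1) by nra.
    pose proof (pow2_ge_0 ((1-t1)*x2 - (1-t2)*x1)).
    destruct (Rle_lt_dec (2*m) ((1-t1)*x2 + (1-t2)*x1)); auto.
    assert (((1-t1)*x2 + (1-t2)*x1)*((1-t1)*x2 + (1-t2)*x1) < (2*m)*(2*m)) by (apply Rmult_le_0_lt_compat; lra).
    nra. }
  replace (K * (l*p1+(1-l)*p2)) with (l*x1+(1-l)*x2) by (unfold x1, x2; ring).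
  assert (0 <= l*(1-l)) by nra.
  replace ((1 - (l * t1 + (1 - l) * t2)) * (l * x1 + (1 - l) * x2)) with
    (l*l*((1-t1)*x1) + (1-l)*(1-l)*((1-t2)*x2) + l*(1-l)*((1-t1)*x2 + (1-t2)*x1)) by ring.
  assert (l*l*m <= l*l*((1-t1)*x1)) by (apply Rmult_le_compat_l; nra).
  assert ((1-l)*(1-l)*m <= (1-l)*(1-l)*((1-t2)*x2)) by (apply Rmult_le_compat_l; nra).
  assert (l*(1-l)*(2*m) <= l*(1-l)*((1-t1)*x2 + (1-t2)*x1)) by (apply Rmult_le_compat_l; nra).
  nra.
Qed.

Lemma sqrt_sq t : 0 <= t -> sqrt t ^ 2 = t.
Proof. intros. simpl. rewrite Rmult_1_r. apply sqrt_sqrt; auto. Qed.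

Lemma f_form j t p q (a_s a_r : nat -> R) a_sr : 0 <= t -> 0 <= p -> 0 <= q ->
  f_j j (sqrt t) (S_of_P a_sr a_s a_r p q) =
  (a_s j ^2 * p) + (a_r j ^2 * q) + 2 * sqrt (t * (a_s j ^2 * p) * (a_r j ^2 * q)).
Proof.
  intros. unfold f_j, S_of_P; simpl.
  rewrite Rmult_assoc, (Rmult_assoc 2), <- sqrt_mult_alt by lra.
  rewrite (Rmult_assoc t). reflexivity.
Qed.

Theorem corollary1 (N : nat) (HN : (1 <= N)%nat) (a_sr : R) (a_s a_r : nat -> R) :
  quasi_concave3 dom3
    (fun t Ps Pr => R_CS N (sqrt t) (S_of_P a_sr a_s a_r Ps Pr)).
Proof.
  intros t1 p1 q1 t2 p2 q2 l [Ht1 [Hp1 Hq1]] [Ht2 [Hp2 Hq2]] Hl.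
  unfold R_CS. apply min_qc. intros j.
  assert (Htm : 0 <= l*t1+(1-l)*t2 <= 1) by nra.
  assert (Hpm : 0 <= l*p1+(1-l)*p2) by nra.
  assert (Hqm : 0 <= l*q1+(1-l)*q2) by nra.
  apply Rmin_qc.
  - rewrite !f_form by lra.
    pose proof (pow2_ge_0 (a_s j)). pose proof (pow2_ge_0 (a_r j)).
    pose proof (sqrt_pos (t1 * (a_s j ^ 2 * p1) * (a_r j ^ 2 * q1))).
    pose proof (sqrt_pos (t2 * (a_s j ^ 2 * p2) * (a_r j ^ 2 * q2))).
    apply Cap_qc; try (apply Rplus_le_le_0_compat; [apply Rplus_le_le_0_compat|]; nra).
    pose proof (core (Rmin (a_s j ^ 2 * p1 + a_r j ^ 2 * q1 + 2 * sqrt (t1 * (a_s j ^ 2 * p1) * (a_r j ^ 2 * q1)))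
                          (a_s j ^ 2 * p2 + a_r j ^ 2 * q2 + 2 * sqrt (t2 * (a_s j ^ 2 * p2) * (a_r j ^ 2 * q2))))
       l t1 (a_s j ^ 2 * p1) (a_r j ^ 2 * q1) t2 (a_s j ^ 2 * p2) (a_r j ^ 2 * q2) Hl
       ltac:(lra) ltac:(nra) ltac:(nra) ltac:(lra) ltac:(nra) ltac:(nra)
       (Rmin_l _ _) (Rmin_r _ _)) as C.
    replace (a_s j ^ 2 * (l * p1 + (1 - l) * p2)) with (l * (a_s j ^ 2 * p1) + (1 - l) * (a_s j ^ 2 * p2)) by ring.
    replace (a_r j ^ 2 * (l * q1 + (1 - l) * q2)) with (l * (a_r j ^ 2 * q1) + (1 - l) * (a_r j ^ 2 * q2)) by ring.
    exact C.
  - cbv beta iota delta [g_j S_of_P snr_s snr_sr].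
    rewrite !sqrt_sq by lra.
    replace (a_s j ^ 2 * p1 + a_sr ^ 2 * p1) with ((a_s j ^ 2 + a_sr ^ 2) * p1) by ring.
    replace (a_s j ^ 2 * p2 + a_sr ^ 2 * p2) with ((a_s j ^ 2 + a_sr ^ 2) * p2) by ring.
    replace (a_s j ^ 2 * (l*p1+(1-l)*p2) + a_sr ^ 2 * (l*p1+(1-l)*p2)) with ((a_s j ^ 2 + a_sr ^ 2) * (l*p1+(1-l)*p2)) by ring.
    pose proof (pow2_ge_0 (a_s j)). pose proof (pow2_ge_0 a_sr).
    assert (0 <= a_s j ^ 2 + a_sr ^ 2) by lra.
    apply Cap_qc; [apply Rmult_le_pos; [lra| apply Rmult_le_pos; lra]|apply Rmult_le_pos; [lra| apply Rmult_le_pos; lra]|].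
    apply g_qc; lra.
Qed.
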